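(* Let $g$ be a nontrivial isometry of a $\delta$-hyperbolic space $(X,d)$. Then: (i) $\ell(g)\le s(g)\le\ell(g)+\delta$; (ii) if $s(g)>\delta$, then for every $p\in\mathbb N^*$ and every $x\in X$, $d(x,g^{2^p}x)\ge d(x,gx)+(2^p-1)(s(g)-\delta)$; (iii) if $s(g)>3\delta$, then for every $x\in X$ the sequence $\big(d(x,g^nx)\big)_{n\in\mathbb N^*}$ is strictly increasing.
   Context: $s(g)=\inf_{x\in X}d(x,gx)$ and $\ell(g)=\lim_{k\to\infty}\frac1kd(x,g^kx)$. A $\delta$-hyperbolic space is a geodesic proper metric space all of whose geodesic triangles are $\delta$-thin: for a triangle with vertices $x,y,z$, map it onto the tripod with edges of lengths the Gromov products $(y|z)_x=\frac12(d(x,y)+d(x,z)-d(y,z))$ etc., isometrically on each side and vertices to ends; points with the same image are at distance $\le\delta$. *)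

(* Defs.v *)
From Stdlib Require Export Reals Lra.
Open Scope R_scope.

Definition is_metric {X : Type} (d : X -> X -> R) : Prop :=
  (forall x y, d x y = 0 <-> x = y) /\
  (forall x y, d x y = d y x) /\
  (forall x y z, d x z <= d x y + d y z).

Definition geodesic_seg {X : Type} (d : X -> X -> R) (a b : X) (gam : R -> X) : Prop :=
  gam 0 = a /\ gam (d a b) = b /\
  forall s t, 0 <= s <= d a b -> 0 <= t <= d a b -> d (gam s) (gam t) = Rabs (s - t).

Definition geodesic_space {X : Type} (d : X -> X -> R) : Prop :=
  forall a b, exists gam, geodesic_seg d a b gam.

Definition seq_cv {X : Type} (d : X -> X -> R) (u : nat -> X) (a : X) : Prop :=
  forall eps, 0 < eps -> exists N, forall n, (N <= n)%nat -> d (u n) a < eps.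

(* proper: closed balls are compact (sequential compactness, equivalent for
   metric spaces) *)
Definition proper_space {X : Type} (d : X -> X -> R) : Prop :=
  forall (c : X) (r : R) (u : nat -> X),
    (forall n, d c (u n) <= r) ->
    exists (phi : nat -> nat) (a : X),
      (forall n, (phi n < phi (S n))%nat) /\ d c a <= r /\ seq_cv d (fun n => u (phi n)) a.

Definition gromov {X : Type} (d : X -> X -> R) (x y z : X) : R :=
  (d x y + d x z - d y z) / 2.

(* delta-thin geodesic triangles, via the tripod map: two points on the sides
   issued from a common vertex x, at the same distance t <= (y|z)_x from x,
   have the same image in the tripod; they must be at distance <= delta.
   (Points on the same side never share a tripod image unless equal.)
   Quantifying over all vertices and all geodesic sides covers all three
   legs of every geodesic triangle. *)
Definition delta_thin {X : Type} (d : X -> X -> R) (delta : R) : Prop :=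
  forall (x y z : X) (g1 g2 : R -> X),
    geodesic_seg d x y g1 -> geodesic_seg d x z g2 ->
    forall t, 0 <= t <= gromov d x y z -> d (g1 t) (g2 t) <= delta.

Definition hyperbolic_space {X : Type} (d : X -> X -> R) (delta : R) : Prop :=
  is_metric d /\ geodesic_space d /\ proper_space d /\ delta_thin d delta.

Definition isometry {X : Type} (d : X -> X -> R) (g : X -> X) : Prop :=
  (forall x y, d (g x) (g y) = d x y) /\ (forall y, exists x, g x = y).

Definition is_glb (E : R -> Prop) (m : R) : Prop :=
  (forall r, E r -> m <= r) /\ (forall m', (forall r, E r -> m' <= r) -> m' <= m).

Definition displacements {X : Type} (d : X -> X -> R) (g : X -> X) : R -> Prop :=
  fun r => exists x, r = d x (g x).

Definition stable_length {X : Type} (d : X -> X -> R) (g : X -> X) (l : R) : Prop :=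
  forall x, Un_cv (fun k => d x (Nat.iter (S k) g x) / INR (S k)) l.

(* Main.v *)
Require Import Defs.
From Stdlib Require Import Reals Lra Lia Classical.
Open Scope R_scope.

Lemma d_refl {X} (d : X -> X -> R) : is_metric d -> forall x, d x x = 0.
Proof. intros [H _] x. apply H. reflexivity. Qed.

Lemma d_nonneg {X} (d : X->X->R) : is_metric d -> forall x y, 0 <= d x y.
Proof. intros Hm x y. pose proof (d_refl d Hm x). destruct Hm as [_ [Hs Ht]].
 specialize (Ht x y x). rewrite (Hs y x) in Ht. lra. Qed.

Lemma iso_iter {X} (d : X->X->R) g : (forall x y, d (g x) (g y) = d x y) ->
  forall n a b, d (Nat.iter n g a) (Nat.iter n g b) = d a b.
Proof. intros H n; induction n; intros a b; simpl; [reflexivity| rewrite H; apply IHn]. Qed.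

Lemma lemA {X} (d : X->X->R) delta (hm : is_metric d) (hgeo : geodesic_space d)
  (hthin : delta_thin d delta) (h : X -> X) (hh : forall x y, d (h x) (h y) = d x y)
  (c : R) (hc : c > delta) (hlow : forall y, c <= d y (h y)) :
  forall x, d x (h (h x)) >= d x (h x) + c - delta.
Proof.
  intros x. destruct (hgeo x (h x)) as [gam [G0 [G1 G2]]].
  pose proof (d_nonneg d hm) as dpos.
  destruct hm as [_ [Hsym Htri]].
  set (L := d x (h x)) in *.
  assert (Hrho : geodesic_seg d (h x) x (fun t => gam (L - t))).
  { red; cbv beta. rewrite (Hsym (h x) x). fold L. split; [|split].
    - replace (L - 0) with L by ring. exact G1.
    - replace (L - L) with 0 by ring. exact G0.
    - intros s t Hs Ht. rewrite G2 by lra. rewrite Rabs_minus_sym. f_equal. ring. }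
  assert (Htau : geodesic_seg d (h x) (h (h x)) (fun t => h (gam t))).
  { red; cbv beta. rewrite hh. fold L. split; [|split].
    - rewrite G0; reflexivity.
    - rewrite G1; reflexivity.
    - intros s t Hs Ht. rewrite hh. apply G2; lra. }
  assert (HL : 0 <= L) by apply dpos.
  pose proof (Htri x (h x) (h (h x))) as T1. rewrite hh in T1. fold L in T1.
  pose proof (dpos x (h (h x))) as T2.
  set (G := gromov d (h x) x (h (h x))).
  assert (HG : G = (L + L - d x (h (h x))) / 2).
  { unfold G, gromov. rewrite (Hsym (h x) x), hh. fold L. reflexivity. }
  destruct (Rlt_or_le (d x (h (h x))) (L + c - delta)) as [Hc|Hc]; [|lra].
  exfalso.
  destruct (Rle_or_lt (L/2) G) as [HG2|HG2].
  - pose proof (hthin _ _ _ _ _ Hrho Htau (L/2)) as T.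
    cbv beta in T. replace (L - L/2) with (L/2) in T by field.
    specialize (T ltac:(fold G; lra)). specialize (hlow (gam (L/2))). lra.
  - pose proof (hthin _ _ _ _ _ Hrho Htau G) as T.
    cbv beta in T. specialize (T ltac:(fold G; lra)).
    pose proof (Htri (gam (L - G)) (h (gam G)) (h (gam (L - G)))) as T3.
    rewrite hh, G2 in T3 by lra.
    rewrite Rabs_left1 in T3 by lra.
    specialize (hlow (gam (L - G))). lra.
Qed.

Lemma part2 {X} (d : X->X->R) delta (hm : is_metric d) (hgeo : geodesic_space d)
  (hthin : delta_thin d delta) g (hiso : forall x y, d (g x) (g y) = d x y) s
  (hlow : forall y, s <= d y (g y)) (hsd : s > delta) :
  forall k, (forall y, d y (Nat.iter (2^k)%nat g y) >= 2^k * (s - delta) + delta) /\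
            (forall x, d x (Nat.iter (2^k)%nat g x) >= d x (g x) + (2^k - 1) * (s - delta)).
Proof.
  induction k as [|k [IH1 IH2]].
  - simpl. split; intros; specialize (hlow y) || specialize (hlow x); lra.
  - assert (E : forall y, Nat.iter (2^S k)%nat g y =
       Nat.iter (2^k)%nat g (Nat.iter (2^k)%nat g y)).
    { intros y. replace (2^S k)%nat with (2^k + 2^k)%nat by (simpl; lia).
      apply Nat.iter_add. }
    assert (Hp : 0 < 2^k) by (apply pow_lt; lra).
    assert (Hc : 2^k * (s - delta) + delta > delta) by nra.
    pose proof (lemA d delta hm hgeo hthin (Nat.iter (2^k)%nat g)
      (iso_iter d g hiso _) _ Hc (fun y => Rge_le _ _ (IH1 y))) as HA.
    simpl pow. split; intros y; rewrite E; specialize (HA y);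
      [specialize (IH1 y) | specialize (IH2 y)]; lra.
Qed.

Lemma part3 {X} (d : X->X->R) delta (hm : is_metric d) (hgeo : geodesic_space d)
  (hthin : delta_thin d delta) g (hiso : forall x y, d (g x) (g y) = d x y) s
  (hlow : forall y, s <= d y (g y)) (hs2 : s > 2 * delta) (hdel : 0 <= delta) :
  forall x n, d x (Nat.iter n g x) < d x (Nat.iter (S n) g x).
Proof.
  pose proof (d_nonneg d hm) as dpos. pose proof (d_refl d hm) as dref.
  destruct hm as [_ [Hsym Htri]].
  intros x n. induction n as [|n IH].
  - simpl. rewrite dref. specialize (hlow x). lra.
  - destruct (hgeo x (g x)) as [gam [G0 [G1 G2]]].
    set (L := d x (g x)) in *.
    set (w := Nat.iter (S n) g x).
    set (yn := Nat.iter n g x).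
    set (y2 := Nat.iter (S (S n)) g x).
    assert (Ew : w = Nat.iter n g (g x)) by apply Nat.iter_succ_r.
    assert (E2 : y2 = Nat.iter (S n) g (g x)) by apply Nat.iter_succ_r.
    assert (Dwn : d w yn = L).
    { rewrite Ew. unfold yn. rewrite iso_iter by exact hiso. apply Hsym. }
    assert (Dw2 : d w y2 = L).
    { rewrite E2. unfold w. rewrite iso_iter by exact hiso. reflexivity. }
    assert (Hrho : geodesic_seg d w yn (fun t => Nat.iter n g (gam (L - t)))).
    { red; cbv beta. rewrite Dwn. split; [|split].
      - replace (L - 0) with L by ring. rewrite G1, Ew. reflexivity.
      - replace (L - L) with 0 by ring. rewrite G0. reflexivity.
      - intros a b Ha Hb. rewrite iso_iter by exact hiso.
        rewrite G2 by lra. rewrite Rabs_minus_sym. f_equal. ring. }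
    assert (Htau : geodesic_seg d w y2 (fun t => Nat.iter (S n) g (gam t))).
    { red; cbv beta. rewrite Dw2. split; [|split].
      - rewrite G0. reflexivity.
      - rewrite G1, E2. reflexivity.
      - intros a b Ha Hb. rewrite iso_iter by exact hiso. apply G2; lra. }
    destruct (hgeo w x) as [sig Hsig].
    destruct (Rlt_or_le (d x w) (d x y2)) as [Hc|Hc]; [exact Hc|]. exfalso.
    assert (HL : 0 <= L) by apply dpos.
    pose proof (hthin _ _ _ _ _ Hrho Hsig (L/2)) as T1.
    cbv beta in T1. replace (L - L/2) with (L/2) in T1 by field.
    assert (HG1 : gromov d w yn x = (L + d x w - d x yn) / 2).
    { unfold gromov. rewrite Dwn, (Hsym w x), (Hsym yn x). reflexivity. }
    rewrite HG1 in T1. specialize (T1 ltac:(fold w yn in IH; lra)).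
    pose proof (hthin _ _ _ _ _ Hsig Htau (L/2)) as T2. cbv beta in T2.
    assert (HG2 : gromov d w x y2 = (d x w + L - d x y2) / 2).
    { unfold gromov. rewrite Dw2, (Hsym w x). reflexivity. }
    rewrite HG2 in T2. specialize (T2 ltac:(lra)).
    pose proof (Htri (Nat.iter n g (gam (L/2))) (sig (L/2))
       (g (Nat.iter n g (gam (L/2))))) as T3.
    specialize (hlow (Nat.iter n g (gam (L/2)))).
    change (Nat.iter (S n) g (gam (L/2))) with (g (Nat.iter n g (gam (L/2)))) in T2.
    lra.
Qed.

Lemma small_div (C eps : R) : 0 <= C -> 0 < eps ->
  exists N, forall n, (N <= n)%nat -> C / INR (S n) < eps.
Proof.
  intros HC He.
  assert (He' : 0 < eps / (C + 1)) by (apply Rdiv_lt_0_compat; lra).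
  destruct (archimed_cor1 _ He') as [N [HN HN0]].
  exists N. intros n Hn.
  assert (HNp : 0 < INR N) by (apply lt_0_INR; lia).
  assert (Hle : INR N <= INR (S n)) by (apply le_INR; lia).
  pose proof (Rinv_le_contravar _ _ HNp Hle) as Hi.
  assert (Hip : 0 < / INR (S n)) by (apply Rinv_0_lt_compat; lra).
  assert (E : C * (eps / (C + 1)) = eps - eps / (C+1)) by (field; lra).
  unfold Rdiv at 1.
  assert (C * / INR (S n) <= C * (eps / (C+1))).
  { apply Rmult_le_compat_l; lra. }
  lra.
Qed.

Lemma sub_mul (a : nat -> R) (a0 : a 0%nat = 0)
  (hsub : forall m n, a (m + n)%nat <= a m + a n) :
  forall k p, a (k * p)%nat <= INR k * a p.
Proof.
  induction k; intros p.
  - simpl. lra.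
  - change (S k * p)%nat with (p + k * p)%nat. rewrite S_INR.
    specialize (hsub p (k*p)%nat). specialize (IHk p). lra.
Qed.

Lemma fekete (a : nat -> R) (hpos : forall n, 0 <= a n) (a0 : a 0%nat = 0)
  (hsub : forall m n, a (m + n)%nat <= a m + a n) :
  exists L, Un_cv (fun k => a (S k) / INR (S k)) L /\
            (forall k, L <= a (S k) / INR (S k)).
Proof.
  set (b := fun k => a (S k) / INR (S k)).
  assert (bpos : forall k, 0 <= b k).
  { intros k. unfold b. apply Rle_mult_inv_pos; [apply hpos| apply lt_0_INR; lia]. }
  set (E := fun r => exists k, r = - b k).
  destruct (completeness E) as [M [HM1 HM2]].
  { exists 0. intros r [k ->]. specialize (bpos k). lra. }
  { exists (- b 0%nat). exists 0%nat. reflexivity. }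
  exists (- M).
  assert (Hinf : forall k, - M <= b k).
  { intros k. assert (- b k <= M) by (apply HM1; exists k; reflexivity). lra. }
  split; [|exact Hinf].
  intros eps Heps.
  assert (Hm : exists m, b m < - M + eps / 2).
  { apply NNPP. intros Hn.
    assert (M <= M - eps / 2).
    { apply HM2. intros r [k ->].
      assert (~ b k < - M + eps / 2) by (intro; apply Hn; exists k; assumption).
      lra. }
    lra. }
  destruct Hm as [m Hm].
  set (m1 := S m). set (A := a m1).
  set (C := INR m1 * a 1%nat).
  assert (HC : 0 <= C) by (apply Rmult_le_pos; [apply pos_INR| apply hpos]).
  destruct (small_div C (eps/2) HC ltac:(lra)) as [N HN].
  exists N. intros n Hn. unfold Rdist.
  specialize (HN n Hn). specialize (Hinf n).
  fold (b n).
  apply Rabs_def1; [|lra].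
  set (n1 := S n).
  assert (Hm1 : m1 <> 0%nat) by (unfold m1; lia).
  pose proof (Nat.div_mod n1 m1 Hm1) as Hdm.
  pose proof (Nat.mod_upper_bound n1 m1 Hm1) as Hmod.
  set (q := (n1 / m1)%nat) in *. set (r := (n1 mod m1)%nat) in *.
  assert (Han : a n1 <= INR q * A + INR r * a 1%nat).
  { rewrite Hdm. replace (m1 * q + r)%nat with (q * m1 + r)%nat by lia.
    eapply Rle_trans; [apply hsub|].
    pose proof (sub_mul a a0 hsub q m1).
    pose proof (sub_mul a a0 hsub r 1). rewrite Nat.mul_1_r in H0.
    fold A in H. lra. }
  assert (Hr : INR r <= INR m1) by (apply le_INR; lia).
  assert (Hqm : INR q * INR m1 <= INR n1).
  { rewrite <- mult_INR. apply le_INR. lia. }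
  assert (Hm1p : 0 < INR m1) by (apply lt_0_INR; lia).
  assert (Hn1p : 0 < INR n1) by (apply lt_0_INR; unfold n1; lia).
  assert (HA : INR q * A <= INR n1 * (A / INR m1)).
  { replace (INR q * A) with ((INR q * INR m1) * (A / INR m1)) by (field; lra).
    apply Rmult_le_compat_r; [|exact Hqm].
    apply Rle_mult_inv_pos; [apply hpos| exact Hm1p]. }
  assert (H1 : INR r * a 1%nat <= C).
  { unfold C. apply Rmult_le_compat_r; [apply hpos| exact Hr]. }
  assert (Hb : b n <= A / INR m1 + C / INR n1).
  { unfold b. fold n1.
    replace (A / INR m1 + C / INR n1) with ((INR n1 * (A / INR m1) + C) / INR n1)
      by (field; lra).
    unfold Rdiv. apply Rmult_le_compat_r.
    - left. apply Rinv_0_lt_compat. exact Hn1p.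
    - lra. }
  unfold b in Hm. fold m1 in Hm. fold A in Hm. fold n1 in HN. lra.
Qed.

Lemma cv_le (u : nat -> R) l c : Un_cv u l -> (forall k, u k <= c) -> l <= c.
Proof.
  intros Hcv Hu. destruct (Rle_or_lt l c) as [H|H]; [exact H|].
  destruct (Hcv (l - c) ltac:(lra)) as [N HN].
  specialize (HN N (le_n N)). unfold Rdist in HN. apply Rabs_def2 in HN.
  specialize (Hu N). lra.
Qed.

Lemma cv_ge (u : nat -> R) l c : Un_cv u l -> (forall k, c <= u k) -> c <= l.
Proof.
  intros Hcv Hu. destruct (Rle_or_lt c l) as [H|H]; [exact H|].
  destruct (Hcv (c - l) ltac:(lra)) as [N HN].
  specialize (HN N (le_n N)). unfold Rdist in HN. apply Rabs_def2 in HN.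
  specialize (Hu N). lra.
Qed.

Theorem lemma8p15 (X : Type) (d : X -> X -> R) (delta : R)
  (hX : hyperbolic_space d delta)
  (g : X -> X) (hg : isometry d g) (hnt : exists x, g x <> x)
  (s : R) (hs : is_glb (displacements d g) s) :
  (exists l, stable_length d g l /\ l <= s /\ s <= l + delta) /\
  (s > delta ->
     forall (p : nat) (x : X), (1 <= p)%nat ->
       d x (Nat.iter (2 ^ p) g x) >= d x (g x) + (INR (2 ^ p) - 1) * (s - delta)) /\
  (s > 3 * delta ->
     forall (x : X) (n : nat), (1 <= n)%nat ->
       d x (Nat.iter n g x) < d x (Nat.iter (S n) g x)).
Proof.
  destruct hX as [hm [hgeo [_ hthin]]].
  destruct hg as [hiso _].
  pose proof (d_nonneg d hm) as dpos. pose proof (d_refl d hm) as dref.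
  pose proof hm as [_ [Hsym Htri]].
  destruct hnt as [x0 _].
  assert (hdel : 0 <= delta).
  { destruct (hgeo x0 x0) as [g0 Hg0].
    pose proof (hthin x0 x0 x0 g0 g0 Hg0 Hg0 0) as T.
    unfold gromov in T. rewrite dref in T. specialize (T ltac:(lra)).
    rewrite dref in T. exact T. }
  assert (hlow : forall y, s <= d y (g y)).
  { intros y. apply (proj1 hs). exists y. reflexivity. }
  assert (P2 : s > delta -> forall (p : nat) (x : X),
       d x (Nat.iter (2 ^ p) g x) >= d x (g x) + (INR (2 ^ p) - 1) * (s - delta)).
  { intros Hsd p x. rewrite pow_INR. replace (INR 2) with 2 by (simpl; lra).
    exact (proj2 (part2 d delta hm hgeo hthin g hiso s hlow Hsd p) x). }
  split; [|split].
  3: { intros Hs3 x n _. apply (part3 d delta hm hgeo hthin g hiso s hlow); lra. }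
  2: { intros Hsd p x _. apply P2; exact Hsd. }
  set (a := fun x n => d x (Nat.iter n g x)).
  assert (asub : forall x m n, a x (m + n)%nat <= a x m + a x n).
  { intros x m n. unfold a. rewrite Nat.iter_add.
    pose proof (Htri x (Nat.iter m g x) (Nat.iter m g (Nat.iter n g x))).
    rewrite iso_iter in H by exact hiso. exact H. }
  assert (a0 : forall x, a x 0%nat = 0) by (intros; apply dref).
  assert (apos : forall x n, 0 <= a x n) by (intros; apply dpos).
  destruct (fekete (a x0) (apos x0) (a0 x0) (asub x0)) as [l [Hcv0 Hinf0]].
  assert (Hbnd : forall x n, a x n <= a x0 n + 2 * d x x0).
  { intros x n. unfold a.
    pose proof (Htri x x0 (Nat.iter n g x)).
    pose proof (Htri x0 (Nat.iter n g x0) (Nat.iter n g x)).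
    rewrite iso_iter in H0 by exact hiso. rewrite (Hsym x0 x) in H0. lra. }
  assert (Hbnd' : forall x n, a x0 n <= a x n + 2 * d x x0).
  { intros x n. unfold a.
    pose proof (Htri x0 x (Nat.iter n g x0)).
    pose proof (Htri x (Nat.iter n g x) (Nat.iter n g x0)).
    rewrite iso_iter in H0 by exact hiso. rewrite (Hsym x0 x) in H. lra. }
  assert (Hstab : stable_length d g l).
  { intros x eps Heps.
    destruct (Hcv0 (eps/2) ltac:(lra)) as [N1 HN1].
    destruct (small_div (2 * d x x0) (eps/2) ltac:(specialize (dpos x x0); lra)
       ltac:(lra)) as [N2 HN2].
    exists (max N1 N2). intros n Hn.
    specialize (HN1 n ltac:(lia)). specialize (HN2 n ltac:(lia)).
    unfold Rdist in *. apply Rabs_def2 in HN1.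
    assert (Hp : 0 < INR (S n)) by (apply lt_0_INR; lia).
    assert (Hd1 : d x (Nat.iter (S n) g x) / INR (S n) <=
              a x0 (S n) / INR (S n) + 2 * d x x0 / INR (S n)).
    { replace (a x0 (S n) / INR (S n) + 2 * d x x0 / INR (S n))
        with ((a x0 (S n) + 2 * d x x0) / INR (S n)) by (field; lra).
      unfold Rdiv. apply Rmult_le_compat_r; [left; apply Rinv_0_lt_compat; lra|].
      apply Hbnd. }
    assert (Hd2 : a x0 (S n) / INR (S n) <=
              d x (Nat.iter (S n) g x) / INR (S n) + 2 * d x x0 / INR (S n)).
    { replace (d x (Nat.iter (S n) g x) / INR (S n) + 2 * d x x0 / INR (S n))
        with ((a x (S n) + 2 * d x x0) / INR (S n)) by (unfold a; field; lra).
      unfold Rdiv. apply Rmult_le_compat_r; [left; apply Rinv_0_lt_compat; lra|].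
      apply Hbnd'. }
    apply Rabs_def1; lra. }
  exists l. split; [exact Hstab|].
  assert (Hl0 : 0 <= l).
  { apply (cv_ge _ _ _ Hcv0). intros k. apply Rle_mult_inv_pos;
      [apply apos| apply lt_0_INR; lia]. }
  split.
  - apply (proj2 hs). intros r [x ->].
    apply (cv_le _ _ _ (Hstab x)). intros k.
    pose proof (sub_mul (a x) (a0 x) (asub x) (S k) 1) as H.
    rewrite Nat.mul_1_r in H. unfold a in H. simpl Nat.iter in H at 2.
    assert (Hp : 0 < INR (S k)) by (apply lt_0_INR; lia).
    replace (d x (g x)) with ((INR (S k) * d x (g x)) / INR (S k)) by (field; lra).
    unfold Rdiv. apply Rmult_le_compat_r; [left; apply Rinv_0_lt_compat; lra|].
    exact H.
  - destruct (Rle_or_lt s delta) as [Hsd|Hsd]; [lra|].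
    destruct (Rle_or_lt (s - delta) l) as [Hl|Hl]; [lra|]. exfalso.
    destruct (Hcv0 (s - delta - l) ltac:(lra)) as [N HN].
    pose proof (Nat.pow_gt_lin_r 2 (S N) ltac:(lia)) as Hpow.
    specialize (HN (2 ^ S N - 1)%nat ltac:(lia)).
    replace (S (2 ^ S N - 1)) with (2 ^ S N)%nat in HN by lia.
    unfold Rdist in HN. apply Rabs_def2 in HN.
    specialize (P2 Hsd (S N) x0). specialize (hlow x0).
    set (T := INR (2 ^ S N)) in *.
    assert (HT : 0 < T) by (unfold T; apply lt_0_INR; lia).
    assert (Hge : T * (s - delta) <= a x0 (2 ^ S N)%nat).
    { unfold a. nra. }
    assert (s - delta <= a x0 (2 ^ S N)%nat / T).
    { replace (s - delta) with ((T * (s - delta)) / T) by (field; lra).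
      unfold Rdiv. apply Rmult_le_compat_r; [left; apply Rinv_0_lt_compat; lra|].
      exact Hge. }
    lra.
Qed.
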